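(* Let $(p_D)_{D\in\mathcal{I}}$ be a probability distribution on $\mathcal{I}$ and $X$ a random variable with $P(X=D)=p_D$. Define the guessing-entropy price $$p^G(\mathbf{Q})=G(X)-\sum_{E:\,p_E>0}p_E\cdot G(X\mid \mathbf{Q}(X)=E),\qquad p_E=\sum_{D:\mathbf{Q}(D)=E}p_D.$$ Then $p^G$ is an arbitrage-free instance-independent pricing function.
   Context: $\mathcal{I}$ is a countable nonempty set of database instances; queries are deterministic functions on $\mathcal{I}$; a query bundle is a finite tuple of queries from a language $\mathcal{L}$, evaluated componentwise; $B(\mathcal{L})$ is the set of bundles, closed under concatenation $\mathbf{Q}_1,\mathbf{Q}_2$. For a random variable $Y$ with values in a countable set, enumerate its values $y_1,y_2,\dots$ in order of non-increasing probability and set $G(Y)=\sum_i i\cdot P(Y=y_i)$ (guessing entropy; it is assumed $G(X)<\infty$ so that the price is defined). $G(X\mid\mathbf{Q}(X)=E)$ is the guessing entropy of the conditional distribution of $X$ given $\mathbf{Q}(X)=E$. An instance-independent pricing function $p$ is arbitrage-free if (i) whenever for all $D',D''\in\mathcal{I}$, $\mathbf{Q}_2(D')=\mathbf{Q}_2(D'')$ implies $\mathbf{Q}_1(D')=\mathbf{Q}_1(D'')$, we have $p(\mathbf{Q}_2)\ge p(\mathbf{Q}_1)$; and (ii) $p(\mathbf{Q}_1,\mathbf{Q}_2)\le p(\mathbf{Q}_1)+p(\mathbf{Q}_2)$ for all bundles. *)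

(* Defs.v *)
From HB Require Import structures.
From Stdlib Require Import ClassicalEpsilon.
From mathcomp Require Import all_boot all_order all_algebra.
From mathcomp Require Import all_classical all_reals all_analysis.
Set Implicit Arguments. Unset Strict Implicit. Unset Printing Implicit Defensive.
Import Order.TTheory GRing.Theory Num.Theory.
Local Open Scope classical_set_scope.
Local Open Scope ring_scope.

Section Guessing.
Variables (R : realType) (T : Type).

Definition gval (P : T -> R) (e : nat -> option T) (i : nat) : R :=
  if e i is Some y then P y else 0.

Definition guess_order (P : T -> R) (e : nat -> option T) : Prop :=
  [/\ (forall i j y, e i = Some y -> e j = Some y -> i = j),
      (forall y, 0 < P y -> exists i, e i = Some y) &
      (forall i, gval P e i.+1 <= gval P e i)].

Definition guess_sum (P : T -> R) (e : nat -> option T) : \bar R :=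
  (\sum_(0 <= i <oo) ((i.+1)%:R * gval P e i)%:E)%E.

(* guessing entropy G of a distribution P on T: sum_i i * P(y_i) for a
   non-increasing enumeration (chosen by epsilon; its value does not
   depend on the choice) *)
Definition guessing_entropy (P : T -> R) : \bar R :=
  guess_sum P (epsilon (inhabits (fun _ => None)) (guess_order P)).
End Guessing.

Section Pricing.
Variables (R : realType) (I : countType) (W : choiceType).

Definition probE (p : I -> R) (Q : I -> W) (E : W) : R :=
  fine (\esum_(D in [set D | Q D = E]) (p D)%:E).

Definition cond_distr (p : I -> R) (Q : I -> W) (E : W) : I -> R :=
  fun D => if `[< Q D = E >] then p D / probE p Q E else 0.

Definition priceG (p : I -> R) (Q : I -> W) : R :=
  fine (guessing_entropy p) -
  fine (\esum_(E in [set E | 0 < probE p Q E])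
          ((probE p Q E)%:E * guessing_entropy (cond_distr p Q E))%E).
End Pricing.

Section Bundles.
Variables (I : Type) (V : Type).
(* a bundle is a finite tuple of queries, evaluated componentwise *)
Definition eval_bundle (b : seq (I -> V)) (D : I) : seq V := map (fun q => q D) b.
Definition in_B (L : set (I -> V)) (b : seq (I -> V)) : Prop :=
  forall q, List.In q b -> L q.

Definition arbitrage_free (R : realType) (L : set (I -> V))
    (pr : seq (I -> V) -> R) : Prop :=
  (forall Q1 Q2, in_B L Q1 -> in_B L Q2 ->
     (forall D' D'', eval_bundle Q2 D' = eval_bundle Q2 D'' ->
                     eval_bundle Q1 D' = eval_bundle Q1 D'') ->
     pr Q1 <= pr Q2) /\
  (forall Q1 Q2, in_B L Q1 -> in_B L Q2 ->
     pr (Q1 ++ Q2) <= pr Q1 + pr Q2).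
End Bundles.

(* Main.v *)
Require Import Defs.
From HB Require Import structures.
From Stdlib Require Import ClassicalEpsilon.
From mathcomp Require Import all_boot all_order all_algebra.
From mathcomp Require Import all_classical all_reals all_analysis.
From mathcomp Require Import finmap.
Import Order.TTheory GRing.Theory Num.Theory.
Local Open Scope classical_set_scope.
Local Open Scope ring_scope.
Lemma sum_cst_seq (R : realType) (T : Type) (s : seq T) (c : R) :
  \sum_(x <- s) c = c *+ size s.
Proof. by elim: s => [|a s IH]; rewrite ?big_nil ?big_cons // IH mulrS. Qed.
Section Exist.
Variables (R : realType) (T : countType) (P : T -> R).
Hypothesis P0 : forall y, 0 <= P y.
Hypothesis Pfin : (\esum_(y in [set: T]) (P y)%:E < +oo)%E.

Lemma finite_ge c : 0 < c -> finite_set [set y | c <= P y].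
Proof.
move=> c0; apply: contrapT => inf.
have S0 : (0 <= \esum_(y in [set: T]) (P y)%:E)%E.
  by apply: esum_ge0 => y _; rewrite lee_fin.
have Sfin : \esum_(y in [set: T]) (P y)%:E \is a fin_num.
  by rewrite ge0_fin_numE.
set S := \esum_(y in [set: T]) (P y)%:E in S0 Sfin.
pose n := (Num.truncn (fine S / c)).+1.
have [B Bsub Bn] := infinite_set_fset n inf.
have : ((c *+ n)%:E <= S)%E.
  apply: esum_ge; exists [set` B]; first by split.
  rewrite fsbig_finite; last exact: finite_fset.
  rewrite set_fsetK sumEFin lee_fin.
  have H1 : c *+ n <= \sum_(x <- B) c.
    rewrite (@sum_cst_seq R T (enum_fset B) c).
    rewrite -(mulr_natl c n) -(mulr_natl c (size _)).
    apply: ler_wpM2r; first exact: ltW.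
    by rewrite ler_nat.
  apply: (le_trans H1).
  rewrite [leLHS]big_seq [leRHS]big_seq.
  apply: ler_sum => x xB; exact: (Bsub x xB).
rewrite -[S]fineK // lee_fin => H.
have H2 := truncnS_gt (fine S / c).
have H3 : fine S / c * c < c *+ n.
  by rewrite -(mulr_natl c n) ltr_pM2r.
rewrite divfK ?gt_eqF // in H3.
by move: (lt_le_trans H3 H); rewrite ltxx.
Qed.
Lemma seq_max (s : seq T) x0 : x0 \in s ->
  exists2 x, x \in s & forall y, y \in s -> P y <= P x.
Proof.
elim: s x0 => [//|a s IH] x0 _.
case: s IH => [|b s] IH.
  by exists a => [|y]; rewrite ?mem_seq1 ?inE // => /eqP ->.
have [m ms mmax] := IH b (mem_head _ _).
have [am|ma] := leP (P a) (P m).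
  exists m; first by rewrite inE ms orbT.
  by move=> y; rewrite inE => /orP [/eqP ->|]; [|apply: mmax].
exists a; first exact: mem_head.
move=> y; rewrite inE => /orP [/eqP ->//|/mmax ym].
exact: (le_trans ym (ltW ma)).
Qed.

Definition avail (s : seq T) y := 0 < P y /\ y \notin s.
Definition best s y := avail s y /\ forall z, avail s z -> P z <= P y.

Lemma best_ex s y : avail s y -> exists x, best s x.
Proof.
move=> ay; have fin := @finite_ge _ ay.1.
pose F := [set z | avail s z /\ P y <= P z].
have : finite_set F by apply: sub_finite_set fin => z [].
move=> /finite_seqP [l Fl].
have yl : y \in l.
  have : F y by split.
  by rewrite Fl.
have [m ml mmax] := @seq_max _ _ yl.
have Fm : F m by rewrite Fl.
exists m; split; first exact: Fm.1.
move=> z az; have [yz|zy] := leP (P y) (P z).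
  apply: mmax; have : F z by split.
  by rewrite Fl.
exact: (ltW (lt_le_trans zy Fm.2)).
Qed.

Definition nxt s : option T :=
  match pselect (exists x, best s x) with
  | left h => Some (projT1 (cid h))
  | right _ => None end.

Lemma nxtP s : match nxt s with
  | Some x => best s x | None => forall y, ~ avail s y end.
Proof.
rewrite /nxt; case: pselect => [h|h].
  exact: (projT2 (cid h)).
by move=> y ay; apply: h; apply: best_ex ay.
Qed.

Fixpoint pre n := if n is m.+1 then
  (if nxt (pre m) is Some y then rcons (pre m) y else pre m) else [::].

Definition enum_g n := nxt (pre n).

Lemma pre_sub m n : (m <= n)%N -> {subset pre m <= pre n}.
Proof.
move=> /subnK <-; elim: (n - m)%N => [//|k IH] x /IH.
rewrite addSn /=; case: (nxt _) => // y.
by rewrite mem_rcons inE => ->; rewrite orbT.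
Qed.

Lemma mem_pre n x : x \in pre n -> exists2 i, (i < n)%N & enum_g i = Some x.
Proof.
elim: n => [//|n IH] /=; rewrite /enum_g.
case E: (nxt (pre n)) => [y|] xin.
  move: xin; rewrite mem_rcons inE => /orP [/eqP ->|].
    by exists n.
  by move=> /IH [i ilt ei]; exists i => //; apply: ltnW.
by have [i ilt ei] := IH xin; exists i => //; apply: ltnW.
Qed.

Lemma pre_mem i n x : (i < n)%N -> enum_g i = Some x -> x \in pre n.
Proof.
move=> lt ei; have sub := @pre_sub i.+1 n lt; apply: sub.
by rewrite /= -/(enum_g i) ei mem_rcons mem_head.
Qed.

Lemma enum_g_inj i j y : enum_g i = Some y -> enum_g j = Some y -> i = j.
Proof.
have H a b : (a < b)%N -> enum_g a = Some y -> enum_g b = Some y -> False.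
  move=> ab ea eb; have yin := @pre_mem _ _ _ ab ea.
  have := nxtP (pre b); rewrite -/(enum_g b) eb => -[[_]].
  by rewrite yin.
move=> ei ej; case: (ltngtP i j) => // [ij|ji].
  by case: (H _ _ ij ei ej).
by case: (H _ _ ji ej ei).
Qed.

Lemma gval_ge0 e i : 0 <= gval P e i.
Proof. by rewrite /gval; case: (e i). Qed.

Lemma enum_g_order : guess_order P enum_g.
Proof.
split.
- exact: enum_g_inj.
- move=> y Py; apply: contrapT => nin.
  have av n : avail (pre n) y.
    split => //; apply/negP => /mem_pre [i _ ei].
    by apply: nin; exists i.
  have ex n : exists2 x, enum_g n = Some x & P y <= P x.
    have := nxtP (pre n); rewrite -/(enum_g n).
    case: (enum_g n) => [x [_ xb]|/(_ y (av n))//].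
    by exists x => //; apply: xb.
  pose x n := odflt y (enum_g n).
  have xE n : enum_g n = Some (x n).
    by rewrite /x; have [z -> _] := ex n.
  have xinj : injective x.
    move=> a b eab; apply: (@enum_g_inj a b (x a)); first exact: xE.
    by rewrite eab; exact: xE.
  have := @finite_ge _ Py; move=> /finite_seqP [l Fl].
  have xl n : x n \in l.
    have : [set z | P y <= P z] (x n).
      by have [z ez] := ex n; rewrite xE in ez; case: ez => ->.
    by rewrite Fl.
  have U : uniq (map x (iota 0 (size l).+1)).
    by rewrite map_inj_uniq ?iota_uniq.
  have sub : {subset map x (iota 0 (size l).+1) <= l}.
    by move=> z /mapP [k _ ->]; exact: xl.
  by have := uniq_leq_size U sub; rewrite size_map size_iota ltnn.
- move=> i; rewrite /gval.
  have := nxtP (pre i.+1); rewrite -/(enum_g i.+1).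
  case: (enum_g i.+1) => [y [[Py yn] _]|_]; last first.
    by case: (enum_g i) => // x; apply: P0.
  have := nxtP (pre i); rewrite -/(enum_g i).
  have yn' : y \notin pre i.
    apply: contra yn; have sub := @pre_sub i i.+1 (leqnSn i); exact: sub.
  case: (enum_g i) => [x [_ xb]|nav].
    by apply: xb; split.
  by exfalso; apply: (nav y); split.
Qed.

Lemma exists_order : exists e, guess_order P e.
Proof. by exists enum_g; exact: enum_g_order. Qed.
End Exist.
Lemma esum_II_cst (R : realType) n (c : R) : 0 <= c ->
  \esum_(j in `I_n) c%:E = (c *+ n)%:E.
Proof.
move=> c0; rewrite esum_fset; last 2 first.
- exact: finite_II.
- by move=> i _; rewrite lee_fin.
rewrite fsbig_finite; last exact: finite_II.
by rewrite sumEFin sum_cst_seq (card_fset_set (card_eqxx _)).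
Qed.

Lemma esum_restrict (R : realType) (T : choiceType) (A : set T) (f : T -> \bar R) :
  (forall x, (0 <= f x)%E) -> (forall x, ~ A x -> f x = 0%E) ->
  \esum_(x in [set: T]) f x = \esum_(x in A) f x.
Proof.
move=> f0 fA; rewrite (esumID A) //; rewrite setTI.
rewrite [X in (_ + X)%E]esum1 ?adde0 // => x [_ /= nA]; exact: fA.
Qed.

Section Formula.
Variables (R : realType) (T : countType) (P : T -> R) (e : nat -> option T).
Hypothesis P0 : forall y, 0 <= P y.
Hypothesis eo : guess_order P e.

Let g i := gval P e i.

Let g0 i : 0 <= g i.
Proof. by rewrite /g /gval; case: (e i). Qed.

Let gmono i j : (i <= j)%N -> g j <= g i.
Proof.
move=> /subnK <-; elim: (j - i)%N => [//|k IH].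
have [_ _ h] := eo; exact: (le_trans (h _) IH).
Qed.

Let Lt := [set z : nat * nat | (z.2 < z.1)%N].

Let step1 : guess_sum P e =
  (\esum_(i in [set: nat]) (g i)%:E + \esum_(z in Lt) (g z.1)%:E)%E.
Proof.
rewrite /guess_sum nneseries_esumT; last first.
  by move=> n; rewrite lee_fin mulr_ge0.
have -> : Lt = [set: nat] `*`` (fun i => `I_i).
  by apply/seteqP; split => z /=; rewrite /Lt /=; move=> //; case.
rewrite -(@esum_esum _ _ _ [set: nat] (fun i => `I_i) (fun i j => (g i)%:E)); last by move=> i j _ _; rewrite lee_fin.
rewrite -esumD; last 2 first.
- by move=> i _; rewrite lee_fin.
- by move=> i _; apply: esum_ge0 => j _; rewrite lee_fin.
apply: eq_esum => i _; rewrite esum_II_cst // -EFinD.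
by congr EFin; rewrite mulr_natl mulrS.
Qed.

Let step2 : \esum_(z in [set: nat * nat]) (Num.min (g z.1) (g z.2))%:E =
  (\esum_(z in Lt) (g z.1)%:E + \esum_(i in [set: nat]) (g i)%:E +
   \esum_(z in Lt) (g z.1)%:E)%E.
Proof.
have m0 z : (0 <= (Num.min (g z.1) (g z.2))%:E)%E.
  by rewrite lee_fin le_min !g0.
rewrite (esumID Lt) // setTI.
rewrite (esumID [set z : nat * nat | z.1 = z.2] ([set: nat * nat] `&` ~` Lt)); last by move=> *.
rewrite -[in RHS]addeA; congr (_ + (_ + _))%E.
- apply: eq_esum => z /= lt; rewrite min_l //; apply: gmono; exact: ltnW.
- have -> : [set: nat * nat] `&` ~` Lt `&` [set z | z.1 = z.2] =
            [set z | z.1 = z.2].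
    apply/seteqP; split => z /=; first by case.
    by move=> h; split => //; rewrite /Lt /= h ltnn.
  rewrite (reindex_esum [set: nat] _ (fun i => (i, i))); last first.
    split.
    - by move=> i _ /=.
    - by move=> i j _ _ [].
    - by move=> [a b] /= ab; exists a => //; rewrite ab.
  by apply: eq_esum => i _ /=; rewrite minxx.
- have -> : [set: nat * nat] `&` ~` Lt `&` ~` [set z | z.1 = z.2] =
            [set z | (z.1 < z.2)%N].
    apply/seteqP; split => -[a b] /=.
      move=> [[_ h1] h2]; rewrite /Lt /= in h1.
      by rewrite ltn_neqAle; apply/andP; split; [apply/eqP|rewrite leqNgt; apply/negP].
    move=> h; split; first split => //.
      by rewrite /Lt /= => h'; move: (ltn_trans h h'); rewrite ltnn.
    by move=> h'; move: h; rewrite h' ltnn.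
  rewrite (reindex_esum Lt _ (fun z => (z.2, z.1))); last first.
    split.
    - by move=> [a b].
    - by move=> [a b] [c d] _ _ [] -> ->.
    - by move=> [a b] /= ab; exists (b, a).
  apply: eq_esum => -[a b] /= ba; rewrite min_r //; apply: gmono; exact: ltnW.
Qed.

Lemma idx_formula : (guess_sum P e + guess_sum P e)%E =
  (\esum_(i in [set: nat]) (g i)%:E +
   \esum_(z in [set: nat * nat]) (Num.min (g z.1) (g z.2))%:E)%E.
Proof.
rewrite step1 step2.
set a := \esum_(i in [set: nat]) (g i)%:E.
set b := \esum_(z in Lt) (g z.1)%:E.
rewrite -[LHS]addeA; congr (_ + _)%E.
by rewrite [LHS]addeC (addeC b a).
Qed.


Let Pos := [set y | 0 < P y].
Let IPos := [set i | 0 < g i].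
Let idx (y : T) : nat := xget 0%N [set i | e i = Some y].

Let idxE y : 0 < P y -> e (idx y) = Some y.
Proof. move=> Py; have [_ cov _] := eo; exact: (xgetPex 0%N (cov y Py)). Qed.

Let gidx y : 0 < P y -> g (idx y) = P y.
Proof. by move=> Py; rewrite /g /gval idxE. Qed.

Let idx_inj y y' : 0 < P y -> 0 < P y' -> idx y = idx y' -> y = y'.
Proof. by move=> Py Py' h; have := idxE _ Py; rewrite h idxE //; case. Qed.

Let idx_surj i : 0 < g i -> exists2 y, 0 < P y & idx y = i.
Proof.
rewrite /g /gval; case Ei: (e i) => [y|]; last by rewrite ltxx.
move=> Py; exists y => //; have [inj _ _] := eo.
exact: (inj _ _ y (idxE _ Py) Ei).
Qed.

Let g_eq0 i : ~ IPos i -> g i = 0.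
Proof.
move=> ni; apply/eqP; rewrite eq_le g0 andbT leNgt; apply/negP => h; exact: ni.
Qed.

Let P_eq0 y : ~ Pos y -> P y = 0.
Proof.
move=> ni; apply/eqP; rewrite eq_le P0 andbT leNgt; apply/negP => h; exact: ni.
Qed.

Let transfer1 : \esum_(i in [set: nat]) (g i)%:E = \esum_(y in [set: T]) (P y)%:E.
Proof.
rewrite (@esum_restrict _ _ IPos (fun i => (g i)%:E)); last 2 first.
- by move=> i; rewrite lee_fin.
- by move=> i /g_eq0 ->.
rewrite (@esum_restrict _ _ Pos (fun y => (P y)%:E)); last 2 first.
- by move=> i; rewrite lee_fin.
- by move=> i /P_eq0 ->.
rewrite (reindex_esum Pos IPos idx); last first.
  split.
  - by move=> y Py; rewrite /IPos /= gidx.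
  - by move=> y y' /set_mem Py /set_mem Py'; apply: idx_inj.
  - by move=> i /idx_surj [y Py <-]; exists y.
by apply: eq_esum => y Py; rewrite gidx.
Qed.

Let transfer2 : \esum_(z in [set: nat * nat]) (Num.min (g z.1) (g z.2))%:E =
  \esum_(w in [set: T * T]) (Num.min (P w.1) (P w.2))%:E.
Proof.
rewrite (@esum_restrict _ _ (IPos `*` IPos)); last 2 first.
- by move=> z; rewrite lee_fin le_min !g0.
- move=> [i j] /= h; congr EFin.
  have [hi|hi] := pselect (IPos i).
    have hj : ~ IPos j by move=> hj; apply: h.
    by rewrite (g_eq0 _ hj) min_r.
  by rewrite (g_eq0 _ hi) min_l.
rewrite (@esum_restrict _ _ (Pos `*` Pos)); last 2 first.
- by move=> z; rewrite lee_fin le_min !P0.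
- move=> [i j] /= h; congr EFin.
  have [hi|hi] := pselect (Pos i).
    have hj : ~ Pos j by move=> hj; apply: h.
    by rewrite (P_eq0 _ hj) min_r.
  by rewrite (P_eq0 _ hi) min_l.
rewrite (reindex_esum (Pos `*` Pos) (IPos `*` IPos) (fun w => (idx w.1, idx w.2))); last first.
  split.
  - by move=> [y y'] [Py Py'] /=; split; rewrite /IPos /= gidx.
  - move=> [y1 y2] [z1 z2] /set_mem [P1 P2] /set_mem [Q1 Q2] [h1 h2].
    by congr pair; apply: idx_inj.
  - move=> [i j] [hi hj].
    have [y1 P1 e1] := idx_surj _ hi; have [y2 P2 e2] := idx_surj _ hj.
    by exists (y1, y2) => //=; rewrite e1 e2.
by apply: eq_esum => -[y y'] [Py Py'] /=; rewrite !gidx.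
Qed.

Lemma guess_formula : (guess_sum P e + guess_sum P e)%E =
  (\esum_(y in [set: T]) (P y)%:E +
   \esum_(w in [set: T * T]) (Num.min (P w.1) (P w.2))%:E)%E.
Proof. by rewrite idx_formula transfer1 transfer2. Qed.

End Formula.
From mathcomp Require Import lra.
Lemma esum_restrict_sub (R : realType) (T : choiceType) (A B : set T) (f : T -> \bar R) :
  A `<=` B -> (forall x, B x -> (0 <= f x)%E) -> (forall x, B x -> ~ A x -> f x = 0%E) ->
  \esum_(x in B) f x = \esum_(x in A) f x.
Proof.
move=> AB f0 fA; rewrite (esumID A) //; rewrite setIidr //.
rewrite [X in (_ + X)%E]esum1 ?adde0 // => x [Bx /= nA]; exact: fA.
Qed.

Lemma esum_le_sub (R : realType) (T : choiceType) (A B : set T) (f : T -> \bar R) :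
  A `<=` B -> (forall x, (0 <= f x)%E) ->
  (\esum_(x in A) f x <= \esum_(x in B) f x)%E.
Proof.
move=> AB f0; rewrite esum_mkcond [X in (_ <= X)%E]esum_mkcond.
apply: le_esum => x _; case: ifPn => xA; last by case: ifPn.
by rewrite ifT //; apply: mem_set; apply: AB; exact: set_mem.
Qed.

Lemma esum_setU_le (R : realType) (T : choiceType) (A B : set T) (f : T -> \bar R) :
  (forall x, (0 <= f x)%E) ->
  (\esum_(x in A `|` B) f x <= \esum_(x in A) f x + \esum_(x in B) f x)%E.
Proof.
move=> f0; rewrite esum_mkcond (esum_mkcond A) (esum_mkcond B) -esumD; last 2 first.
- by move=> x _; case: ifP.
- by move=> x _; case: ifP.
apply: le_esum => x _; rewrite in_setU.
case: (x \in A); case: (x \in B) => //=; rewrite ?adde0 ?add0e //.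
by rewrite leeDl.
Qed.

Lemma esumZl (R : realType) (T : choiceType) (A : set T) (f : T -> \bar R) (r : R) :
  0 <= r -> (forall x, (0 <= f x)%E) ->
  (r%:E * \esum_(x in A) f x)%E = \esum_(x in A) (r%:E * f x)%E.
Proof.
have le1 (s : R) (h : T -> \bar R) : 0 <= s -> (forall x, (0 <= h x)%E) ->
    (\esum_(x in A) (s%:E * h x) <= s%:E * \esum_(x in A) h x)%E.
  move=> s0 h0; apply: ge_ereal_sup => /= _ [X [finX XA] <-].
  rewrite -ge0_mule_fsumr //; apply: lee_wpmul2l; first by rewrite lee_fin.
  by apply: ereal_sup_ubound; exists X.
move=> r0 f0; have [->|rn0] := eqVneq r 0.
  by rewrite mul0e esum1 // => x _; rewrite mul0e.
apply/eqP; rewrite eq_le le1 // andbT.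
have rp : 0 < r by rewrite lt_def rn0.
have := le1 r^-1 (fun x => r%:E * f x)%E; rewrite invr_ge0 ltW //.
move=> /(_ isT (fun x => mule_ge0 (ltW _) (f0 x))).
move=> H; have {}H := H (_ : (0 < r%:E)%E); rewrite ?lte_fin // in H; have {}H := H rp.
have -> : \esum_(x in A) f x = \esum_(x in A) (r^-1%:E * (r%:E * f x))%E.
  by apply: eq_esum => x _; rewrite muleA -EFinM mulVf ?mul1e.
have r0' : (0 <= r%:E)%E by rewrite lee_fin.
have H2 := lee_wpmul2l r0' H; move: H2 => /=.
by rewrite muleA -EFinM divff ?mul1e ?gt_eqF.
Qed.
Lemma ge_formula (R : realType) (T : countType) (P : T -> R) :
  (forall y, 0 <= P y) -> (\esum_(y in [set: T]) (P y)%:E < +oo)%E ->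
  (guessing_entropy P + guessing_entropy P)%E =
  (\esum_(y in [set: T]) (P y)%:E +
   \esum_(w in [set: T * T]) (Num.min (P w.1) (P w.2))%:E)%E.
Proof.
move=> P0 Pf; rewrite /guessing_entropy; apply: guess_formula => //.
apply: epsilon_spec; exact: exists_order.
Qed.

Lemma ge_ge0 (R : realType) (T : Type) (P : T -> R) : (forall y, 0 <= P y) ->
  (0 <= guessing_entropy P)%E.
Proof.
move=> P0; rewrite /guessing_entropy /guess_sum; apply: nneseries_ge0 => n _ _.
by rewrite lee_fin mulr_ge0 // /gval; case: (_ n).
Qed.
Section Price.
Variables (R : realType) (I : countType) (W : choiceType) (p : I -> R) (Q : I -> W).
Hypothesis p0 : forall D, 0 <= p D.
Hypothesis p1 : (\esum_(D in [set: I]) (p D)%:E)%E = 1%E.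

Let cell E := [set D | Q D = E].
Let cell2 E := [set w : I * I | Q w.1 = E /\ Q w.2 = E].
Let mn (w : I * I) := (Num.min (p w.1) (p w.2))%:E.

Let mn0 w : (0 <= mn w)%E.
Proof. by rewrite /mn lee_fin le_min !p0. Qed.

Let cell_le1 E : (\esum_(D in cell E) (p D)%:E <= 1)%E.
Proof. by rewrite -p1; apply: esum_le_sub => // D; rewrite lee_fin. Qed.

Let probEE E : (probE p Q E)%:E = \esum_(D in cell E) (p D)%:E.
Proof.
rewrite /probE fineK // ge0_fin_numE; last by apply: esum_ge0 => D _; rewrite lee_fin.
exact: (le_lt_trans (cell_le1 E) (ltry _)).
Qed.

Let probE_ge0 E : 0 <= probE p Q E.
Proof. by rewrite -lee_fin probEE; apply: esum_ge0 => D _; rewrite lee_fin. Qed.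

Let p_le D : p D <= probE p Q (Q D).
Proof.
rewrite -lee_fin probEE.
have -> : (p D)%:E = \esum_(x in [set D]) (p x)%:E by rewrite esum_set1 // lee_fin.
by apply: esum_le_sub => [x -> //|x]; rewrite lee_fin.
Qed.

Let p_eq0 D : ~ 0 < probE p Q (Q D) -> p D = 0.
Proof.
move=> h; apply/le_anti; rewrite p0 andbT (le_trans (p_le D)) //.
by rewrite leNgt; apply/negP.
Qed.

Let c_ge0 E D : 0 <= cond_distr p Q E D.
Proof. by rewrite /cond_distr; case: ifP => // _; apply: divr_ge0. Qed.

Let cE E D : 0 < probE p Q E ->
  ((probE p Q E)%:E * (cond_distr p Q E D)%:E)%E =
  (if D \in cell E then (p D)%:E else 0)%E.
Proof.
move=> h; rewrite /cond_distr -EFinM.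
case: (pselect (Q D = E)) => q.
  rewrite asboolT // ifT; last exact: mem_set.
  by rewrite mulrC divfK // gt_eqF.
by rewrite asboolF // memNset // mulr0.
Qed.

Let cE2 E w : 0 < probE p Q E ->
  ((probE p Q E)%:E * (Num.min (cond_distr p Q E w.1) (cond_distr p Q E w.2))%:E)%E =
  (if w \in cell2 E then mn w else 0)%E.
Proof.
move=> h; rewrite -EFinM.
case: (pselect (cell2 E w)) => q.
  rewrite ifT; last exact: mem_set.
  rewrite minr_pMr ?ltW // /mn /cond_distr asboolT ?q.1 // asboolT ?q.2 //.
  by rewrite !(mulrC (probE p Q E)) !divfK // gt_eqF.
rewrite ifF; last exact: memNset.
case: (pselect (Q w.1 = E)) => q1.
  have q2 : Q w.2 <> E by move=> q2; apply: q.
  by rewrite [cond_distr p Q E w.2]/cond_distr asboolF // min_r ?mulr0.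
by rewrite [cond_distr p Q E w.1]/cond_distr asboolF // min_l ?mulr0.
Qed.

Let c_fin E : 0 < probE p Q E ->
  (\esum_(D in [set: I]) (cond_distr p Q E D)%:E < +oo)%E.
Proof.
move=> h.
have : ((probE p Q E)%:E * (\esum_(D in [set: I]) (cond_distr p Q E D)%:E) <= 1)%E.
  rewrite (@esumZl _ _ _ _ _ (ltW h)); last by move=> D; rewrite lee_fin.
  have -> : \esum_(D in [set: I]) ((probE p Q E)%:E * (cond_distr p Q E D)%:E)%E =
     \esum_(D in [set: I]) (if D \in cell E then (p D)%:E else 0)%E.
    by apply: eq_esum => D _; exact: cE.
  rewrite -esum_mkcond; exact: cell_le1.
move=> H; rewrite ltNge leye_eq; apply/negP => /eqP Hoo.
by move: H; rewrite Hoo muleC gt0_mulye ?lte_fin // leye_eq.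
Qed.

Let perE E : 0 < probE p Q E ->
  ((probE p Q E)%:E * guessing_entropy (cond_distr p Q E) +
   (probE p Q E)%:E * guessing_entropy (cond_distr p Q E))%E =
  (\esum_(D in [set: I]) (if D \in cell E then (p D)%:E else 0) +
   \esum_(w in [set: I * I]) (if w \in cell2 E then mn w else 0))%E.
Proof.
move=> h; rewrite -ge0_muleDr; [|exact: ge_ge0|exact: ge_ge0].
rewrite ge_formula //; last exact: c_fin.
rewrite ge0_muleDr; last 2 first.
- by apply: esum_ge0 => D _; rewrite lee_fin.
- by apply: esum_ge0 => w _; rewrite lee_fin le_min !c_ge0.
rewrite !(@esumZl _ _ _ _ _ (ltW h)); last 2 first.
- by move=> w; rewrite lee_fin le_min !c_ge0.
- by move=> D; rewrite lee_fin.
congr (_ + _)%E; apply: eq_esum => x _; [exact: cE | exact: cE2].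
Qed.


Let sum1 : \esum_(E in [set E | 0 < probE p Q E])
    \esum_(D in [set: I]) (if D \in cell E then (p D)%:E else 0)%E =
  \esum_(D in [set: I]) (p D)%:E.
Proof.
have -> : \esum_(E in [set E | 0 < probE p Q E])
    \esum_(D in [set: I]) (if D \in cell E then (p D)%:E else 0)%E =
  \esum_(E in [set E | 0 < probE p Q E]) \esum_(D in cell E) (p D)%:E.
  by apply: eq_esum => E _; rewrite [RHS]esum_mkcond.
rewrite (@esum_esum _ _ _ _ _ (fun E D => (p D)%:E)); last first.
  by move=> *; rewrite lee_fin.
rewrite (reindex_esum [set D | 0 < probE p Q (Q D)] _ (fun D => (Q D, D))); last first.
  split.
  - by move=> D /= h; split.
  - by move=> D D' _ _ [].
  - move=> [E D] [/= h q]; rewrite /cell /= in q.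
    by exists D; [rewrite /= q | rewrite q].
rewrite /=; apply/esym/esum_restrict; first by move=> D; rewrite lee_fin.
by move=> D /p_eq0 ->.
Qed.

Let sum2 : \esum_(E in [set E | 0 < probE p Q E])
    \esum_(w in [set: I * I]) (if w \in cell2 E then mn w else 0)%E =
  \esum_(w in [set w : I * I | Q w.1 = Q w.2]) mn w.
Proof.
have -> : \esum_(E in [set E | 0 < probE p Q E])
    \esum_(w in [set: I * I]) (if w \in cell2 E then mn w else 0)%E =
  \esum_(E in [set E | 0 < probE p Q E]) \esum_(w in cell2 E) mn w.
  by apply: eq_esum => E _; rewrite [RHS]esum_mkcond.
rewrite (@esum_esum _ _ _ _ _ (fun E w => mn w)); last by move=> *.
rewrite (reindex_esum [set w : I * I | Q w.1 = Q w.2 /\ 0 < probE p Q (Q w.1)] _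
   (fun w => (Q w.1, w))); last first.
  split.
  - by move=> w /= [q h]; split.
  - by move=> w w' _ _ [].
  - move=> [E w] [/= h [q1 q2]].
    by exists w; [rewrite /= q1 q2 | rewrite /= q1].
rewrite /=; apply/esym/esum_restrict_sub.
- by move=> w [].
- by move=> *.
- move=> w /= q nh; rewrite /mn (p_eq0 w.1) ?min_l //.
  by move=> h; apply: nh.
Qed.

Lemma price_formula : (guessing_entropy p < +oo)%E ->
  priceG p Q = fine (\esum_(w in [set w : I * I | Q w.1 <> Q w.2]) mn w) / 2.
Proof.
move=> Gfin; rewrite /priceG.
set G := guessing_entropy p.
set A := \esum_(E in _) _.
set Mall := \esum_(w in [set: I * I]) mn w.
set Ms := \esum_(w in [set w : I * I | Q w.1 = Q w.2]) mn w.
set Md := \esum_(w in [set w : I * I | Q w.1 <> Q w.2]) mn w.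
have HG : (G + G = 1 + Mall)%E.
  by rewrite /G ge_formula // p1 // ltry.
have HA : (A + A = 1 + Ms)%E.
  rewrite /A -esumD; last 2 first.
  - by move=> E h; apply: mule_ge0; [rewrite lee_fin | apply: ge_ge0].
  - by move=> E h; apply: mule_ge0; [rewrite lee_fin | apply: ge_ge0].
  rewrite (eq_esum (b := fun E =>
      (\esum_(D in [set: I]) (if D \in cell E then (p D)%:E else 0) +
       \esum_(w in [set: I * I]) (if w \in cell2 E then mn w else 0))%E)); last first.
    by move=> E h; apply: perE.
  rewrite esumD; last 2 first.
  - by move=> E _; apply: esum_ge0 => D _; case: ifP => //; rewrite lee_fin.
  - by move=> E _; apply: esum_ge0 => w _; case: ifP.
  by rewrite sum1 sum2 p1.
have HM : Mall = (Ms + Md)%E.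
  rewrite /Mall (esumID [set w : I * I | Q w.1 = Q w.2]) // setTI.
  congr (_ + _)%E; congr esum; apply/seteqP; split => w /=.
  - by move=> [].
  - by move=> h; split.
have G0 : (0 <= G)%E by apply: ge_ge0.
have Gf : G \is a fin_num by rewrite ge0_fin_numE.
have : (1 + Mall)%E \is a fin_num by rewrite -HG fin_numD Gf.
rewrite fin_numD => /andP [_ Mf].
move: (Mf); rewrite HM fin_numD => /andP [Msf Mdf].
have : (1 + Ms)%E \is a fin_num by rewrite fin_numD Msf.
rewrite -HA fin_numD => /andP [Af _].
move: HG HA HM.
rewrite -(fineK Gf) -(fineK Af) -(fineK Mf) -(fineK Msf) -(fineK Mdf).
rewrite -!EFinD => /eqP; rewrite eqe => /eqP h1 /eqP; rewrite eqe => /eqP h2.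
move=> /eqP; rewrite eqe => /eqP h3.
rewrite !fineK //.
lra.
Qed.

End Price.
Theorem lemma19 (R : realType) (I : countType) (V : choiceType)
  (L : set (I -> V)) (p : I -> R)
  (p_ge0 : forall D, 0 <= p D)
  (p_sum1 : (\esum_(D in [set: I]) (p D)%:E)%E = 1%E)
  (GX_fin : (guessing_entropy p < +oo)%E) :
  arbitrage_free L (fun b : seq (I -> V) => priceG p (eval_bundle b)).
Proof.
set mn := fun w : I * I => (Num.min (p w.1) (p w.2))%:E.
have mn0 w : (0 <= mn w)%E by rewrite /mn lee_fin le_min !p_ge0.
have pf (b : seq (I -> V)) : priceG p (eval_bundle b) =
    fine (\esum_(w in [set w : I * I | eval_bundle b w.1 <> eval_bundle b w.2]) mn w) / 2.
  exact: price_formula.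
have HG := @ge_formula R I p p_ge0 (_ : (\esum_(D in [set: I]) (p D)%:E < +oo)%E).
rewrite p_sum1 in HG; have {}HG := HG (ltry _).
have G0 : (0 <= guessing_entropy p)%E by apply: ge_ge0.
have Gf : guessing_entropy p \is a fin_num by rewrite ge0_fin_numE.
have : (1 + \esum_(w in [set: I * I]) mn w)%E \is a fin_num.
  by rewrite -HG fin_numD Gf.
rewrite fin_numD => /andP [_ Mf].
have Af (A : set (I * I)) : \esum_(w in A) mn w \is a fin_num.
  rewrite ge0_fin_numE; last exact: esum_ge0.
  apply: (le_lt_trans (@esum_le_sub _ _ A setT mn (@subsetT _ A) mn0)).
  by rewrite -ge0_fin_numE // esum_ge0.
have h2 : (0 : R) <= 2^-1 by rewrite invr_ge0.
split.
- move=> Q1 Q2 _ _ h; rewrite !pf; apply: ler_wpM2r => //.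
  apply: fine_le; [exact: Af|exact: Af|].
  apply: esum_le_sub => // w /= d1 d2; apply: d1; exact: h.
- move=> Q1 Q2 _ _; rewrite !pf -mulrDl; apply: ler_wpM2r => //.
  rewrite -fineD; [|exact: Af|exact: Af].
  apply: fine_le; [exact: Af| by rewrite fin_numD !Af|].
  apply: (le_trans _ (@esum_setU_le _ _ _ _ mn mn0)).
  apply: esum_le_sub => // w /= d.
  case: (pselect (eval_bundle Q1 w.1 = eval_bundle Q1 w.2)) => e1; last by left.
  right => e2; apply: d; by rewrite /eval_bundle !map_cat -!/(eval_bundle _ _) e1 e2.
Qed.
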